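(* Let $T$ be a commutative ring with identity, $S$ a unital subring and $I$ a nil ideal of $T$ with $T=S+I$ and $S\cap I=\{0\}$. Then $T$ is roughly complemented if and only if for each $s\in S$ and $i\in I$ there are $t\in S$ and $j\in I$ such that $st=0$, $s+t\in\mathrm{areg}(S)$, and $(s+i)j=it$. In particular, if $T$ is roughly complemented, then $S$ is roughly complemented.
   Context: For a ring $A$: $\mathfrak{N}(A)$ is the nilradical, $\mathrm{reg}(A)$ the regular elements, $\mathrm{areg}(A)=\{x: x+\mathfrak{N}(A)\in\mathrm{reg}(A/\mathfrak{N}(A))\}$. An element $a\in A$ is roughly complemented if there is $b\in A$ with $ab=0$ and $a+b\in\mathrm{areg}(A)$; $A$ is roughly complemented if every element is. *)

(* Defs.v *)
From HB Require Import structures.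
From mathcomp Require Import all_boot all_order all_algebra.
Set Implicit Arguments. Unset Strict Implicit. Unset Printing Implicit Defensive.
Import GRing.Theory.
Local Open Scope ring_scope.

Definition nilpotentr (A : comPzRingType) (x : A) : Prop := exists n : nat, x ^+ n = 0.

(* x in the subring S is "almost regular" in S: x + N(S) is a regular element
   of S/N(S), i.e. for y in S, x*y in N(S) implies y in N(S).  Nilpotency in S
   coincides with nilpotency in the ambient ring. *)
Definition areg_in (A : comPzRingType) (S : {pred A}) (x : A) : Prop :=
  x \in S /\ forall y, y \in S -> nilpotentr (x * y) -> nilpotentr y.

Definition areg (A : comPzRingType) (x : A) : Prop :=
  forall y : A, nilpotentr (x * y) -> nilpotentr y.

Definition roughly_complemented (A : comPzRingType) : Prop :=
  forall a : A, exists b : A, a * b = 0 /\ areg (a + b).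

Definition roughly_complemented_in (A : comPzRingType) (S : {pred A}) : Prop :=
  forall a, a \in S -> exists b, b \in S /\ a * b = 0 /\ areg_in S (a + b).

Definition nil_ideal (A : comPzRingType) (I : {pred A}) : Prop :=
  [/\ 0 \in I, {in I &, forall u v, u - v \in I},
      (forall t u, u \in I -> t * u \in I) & {in I, forall u, nilpotentr u}].

(* Main.v *)
Require Import Defs.
From HB Require Import structures.
From mathcomp Require Import all_boot all_order all_algebra.
From mathcomp Require Import ring.
Set Implicit Arguments. Unset Strict Implicit.
Import GRing.Theory.
Local Open Scope ring_scope.

Section Aux.
Variables (T : comPzRingType) (S I : {pred T}).
Hypotheses (hS : GRing.subring_closed S) (hI : nil_ideal I)
  (hcap : forall x : T, x \in S -> x \in I -> x = 0).

Lemma I0 : 0 \in I. Proof. by case: hI. Qed.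
Lemma IB u v : u \in I -> v \in I -> u - v \in I.
Proof. case: hI => _ h _ _; exact: h. Qed.
Lemma IN u : u \in I -> - u \in I.
Proof. by move=> h; rewrite -sub0r; apply: IB => //; apply: I0. Qed.
Lemma ID u v : u \in I -> v \in I -> u + v \in I.
Proof. by move=> hu hv; rewrite -[v]opprK; apply: IB => //; apply: IN. Qed.
Lemma IM t u : u \in I -> t * u \in I.
Proof. case: hI => _ _ h _; exact: h. Qed.
Lemma Inil u : u \in I -> nilpotentr u.
Proof. case: hI => _ _ _ h; exact: h. Qed.

Lemma S1 : 1 \in S. Proof. by case: hS. Qed.
Lemma SB u v : u \in S -> v \in S -> u - v \in S.
Proof. case: hS => _ h _; exact: h. Qed.
Lemma SM u v : u \in S -> v \in S -> u * v \in S.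
Proof. case: hS => _ _ h; exact: h. Qed.
Lemma S0 : 0 \in S. Proof. by rewrite -(subrr 1); apply: SB; apply: S1. Qed.
Lemma SN u : u \in S -> - u \in S.
Proof. by move=> h; rewrite -sub0r; apply: SB => //; apply: S0. Qed.
Lemma SD u v : u \in S -> v \in S -> u + v \in S.
Proof. by move=> hu hv; rewrite -[v]opprK; apply: SB => //; apply: SN. Qed.
Lemma SX u n : u \in S -> u ^+ n \in S.
Proof. move=> h; elim: n => [|n IH]; first by rewrite expr0 S1.
by rewrite exprS; apply: SM. Qed.

Lemma powdiff s k n : k \in I -> (s + k) ^+ n - s ^+ n \in I.
Proof.
move=> hk; elim: n => [|n IH]; first by rewrite !expr0 subrr I0.
have -> : (s + k) ^+ n.+1 - s ^+ n.+1 =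
   (s + k) * ((s + k) ^+ n - s ^+ n) + s ^+ n * k.
  by rewrite !exprS; ring.
by apply: ID; apply: IM.
Qed.

Lemma nilSI s k : s \in S -> k \in I -> (nilpotentr (s + k) <-> nilpotentr s).
Proof.
move=> hs hk; split=> [[n hn]|[n hn]].
  exists n; apply: hcap; first exact: SX.
  have := IN (powdiff s n hk); rewrite hn sub0r opprK //.
have : (s + k) ^+ n \in I by have := powdiff s n hk; rewrite hn subr0.
move/Inil => [m hm]; exists (n * m)%N; by rewrite exprM.
Qed.

Lemma nilI s k : s \in S -> k \in I -> (nilpotentr (k + s) <-> nilpotentr s).
Proof. by move=> hs hk; rewrite addrC; apply: nilSI. Qed.

End Aux.

Theorem mainTheorem17 (T : comPzRingType) (S I : {pred T})
  (hS : GRing.subring_closed S) (hI : nil_ideal I)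
  (hsum : forall x : T, exists s i, [/\ s \in S, i \in I & x = s + i])
  (hcap : forall x : T, x \in S -> x \in I -> x = 0) :
  (roughly_complemented T <->
     (forall s i, s \in S -> i \in I ->
        exists t j, [/\ t \in S, j \in I, s * t = 0, areg_in S (s + t)
                      & (s + i) * j = i * t]))
  /\ (roughly_complemented T -> roughly_complemented_in S).
Proof.
have ID := ID hI; have IM := IM hI; have IN := IN hI; have IB := IB hI.
have SM := SM hS; have SD := SD hS.
have nilI := nilI hS hI hcap; have nilSI := nilSI hS hI hcap.
have forw : roughly_complemented T ->
     (forall s i, s \in S -> i \in I ->
        exists t j, [/\ t \in S, j \in I, s * t = 0, areg_in S (s + t)
                      & (s + i) * j = i * t]).
  move=> rc s i hs hi.
  have [b [hb0 hb]] := rc (s + i).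
  have [t [j' [ht hj' eb]]] := hsum b; subst b.
  have hk : s * j' + i * t + i * j' \in I.
    by rewrite (mulrC i t); exact: (ID _ _ (ID _ _ (IM s _ hj') (IM t _ hi)) (IM i _ hj')).
  have hst : s * t = 0.
    apply: hcap; first exact: SM.
    have -> : s * t = - (s * j' + i * t + i * j').
      apply: (addrI (s * j' + i * t + i * j')); rewrite addrN -hb0; ring.
    exact: IN.
  exists t, (- j'); split => //; first exact: IN.
  - split; first exact: SD.
    move=> y hy hn; apply: hb.
    have -> : (s + i + (t + j')) * y = y * (i + j') + (s + t) * y by ring.
    apply/(nilI _ _ (SM _ _ (SD _ _ hs ht) hy) (IM y _ (ID _ _ hi hj'))); exact: hn.
  - apply/eqP; rewrite -subr_eq0; apply/eqP.
    have -> : (s + i) * - j' - i * t = - ((s + i) * (t + j') - s * t) by ring.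
    by rewrite hb0 hst subr0 oppr0.
split; last first.
  move=> rc a ha; have [t [j [ht _ hst har _]]] := forw rc a 0 ha (I0 hI).
  by exists t.
split => // H a.
have [s [i [hs hi ->]]] := hsum a.
have [t [j [ht hj hst [hreg1 hreg] he]]] := H s i hs hi.
exists (t - j); split.
  have -> : (s + i) * (t - j) = s * t + (i * t - (s + i) * j) by ring.
  by rewrite hst he subrr addr0.
move=> y hn.
have [s' [i' [hs' hi' ey]]] := hsum y; subst y.
apply/(nilSI s' i' hs' hi'); apply: hreg => //.
move: hn; rewrite (_ : (s + i + (t - j)) * (s' + i') =
  (s + t) * s' + ((s + t) * i' + (s' + i') * (i - j))); last by ring.
move=> hn; exact: ((nilSI _ _ (SM _ _ (SD _ _ hs ht) hs')
   (ID _ _ (IM (s + t) _ hi') (IM (s' + i') _ (IB _ _ hi hj)))).1 hn).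
Qed.
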